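(* Let $M=(E,\mathcal{L})$ be a matroid with finitarization $M^{\mathrm{fin}}$, and define $\hat{M}=(E,\mathcal{K})$ where $S\in\mathcal{K}$ if and only if there exist a base $F$ of $M^{\mathrm{fin}}$ and a base $B$ of $M$ with $B\subseteq F$ and $S\subseteq F\setminus B$. If $M$ is nearly finitary and $\hat{M}$ is a matroid, then $M$ is $k$-nearly finitary for some integer $k$.
   Context: A matroid $(E,\mathcal{L})$: $\emptyset\in\mathcal{L}$; subsets of independent sets are independent; if $B$ is maximal in $\mathcal{L}$ and $A\in\mathcal{L}$ is not maximal, then $A\cup\{b\}\in\mathcal{L}$ for some $b\in B\setminus A$; for $A\in\mathcal{L}$ and $A\subseteq X\subseteq E$ the family $\{S\in\mathcal{L}:A\subseteq S\subseteq X\}$ has a maximal element. Bases are maximal independent sets. The finitarization $M^{\mathrm{fin}}=(E,\mathcal{L}^{\mathrm{fin}})$, where $\mathcal{L}^{\mathrm{fin}}$ is the set of $S\subseteq E$ all of whose finite subsets lie in $\mathcal{L}$, is a matroid. $M$ is nearly finitary if $F\setminus B$ is finite whenever a base $F$ of $M^{\mathrm{fin}}$ contains a base $B$ of $M$; $M$ is $k$-nearly finitary if $|F\setminus B|\le k$ for all such pairs. *)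

(* Defs.v *)
From mathcomp Require Import all_boot.
From mathcomp Require Import boolp classical_sets functions cardinality.
Set Implicit Arguments. Unset Strict Implicit. Unset Printing Implicit Defensive.
Local Open Scope classical_set_scope.
Local Open Scope card_scope.

Definition maximal_in {E : Type} (P : set (set E)) (B : set E) : Prop :=
  P B /\ forall S, P S -> B `<=` S -> S = B.

Definition is_base {E : Type} (L : set (set E)) (B : set E) : Prop :=
  maximal_in L B.

Definition is_matroid {E : Type} (L : set (set E)) : Prop :=
  [/\ L set0,
      (forall A B, L B -> A `<=` B -> L A),
      (forall A B, is_base L B -> L A -> ~ is_base L A ->
          exists b, B b /\ ~ A b /\ L (A `|` [set b]))
    & (forall A X, L A -> A `<=` X ->
          exists M, maximal_in [set S | L S /\ A `<=` S /\ S `<=` X] M)].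

Definition finitarization {E : Type} (L : set (set E)) : set (set E) :=
  [set S | forall F, finite_set F -> F `<=` S -> L F].

Definition nearly_finitary {E : Type} (L : set (set E)) : Prop :=
  forall F B, is_base (finitarization L) F -> is_base L B -> B `<=` F ->
    finite_set (F `\` B).

Definition k_nearly_finitary {E : Type} (k : nat) (L : set (set E)) : Prop :=
  forall F B, is_base (finitarization L) F -> is_base L B -> B `<=` F ->
    (F `\` B) #<= `I_k.

Definition hat_indep {E : Type} (L : set (set E)) : set (set E) :=
  [set S | exists F B, is_base (finitarization L) F /\ is_base L B /\
             B `<=` F /\ S `<=` F `\` B].

(* Main.v *)
Require Import Defs.
From mathcomp Require Import all_boot.
From mathcomp Require Import boolp classical_sets functions cardinality.
From mathcomp Require Import finmap.
From mathcomp Require Import zify.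
Set Implicit Arguments. Unset Strict Implicit. Unset Printing Implicit Defensive.

Local Open Scope classical_set_scope.

Lemma lt_card_aux (T : choiceType) (A B : {fset T}) y :
  (A `<=` B)%fset -> y \in B -> y \notin A -> (#|` A| < #|` B|)%N.
Proof.
move=> AB yB yA; apply: fproper_ltn_card; rewrite fproperE AB /=.
apply/negP => /fsubsetP/(_ y yB); by rewrite (negbTE yA).
Qed.

Lemma step_aux (T : choiceType) (K : set (set T)) (b : {fset T}) :
  is_matroid K -> is_base K [set` b] ->
  forall i : {fset T}, K [set` i] ->
  (#|` i| <= #|` b|)%N \/ exists j : {fset T}, K [set` j] /\
     (#|` i| <= #|` j|)%N /\ (#|` (b `\` j)%fset| < #|` (b `\` i)%fset|)%N.
Proof.
move=> [K0 Ksub Kaug Kmax] Bb i Ki.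
have [ib|nib] := pselect (is_base K [set` i]).
  have [sub|nsub] := boolP (i `<=` b)%fset.
    by left; exact: fsubset_leq_card.
  move/fsubsetPn: nsub => [x xi xb].
  pose i2 := (i `\ x)%fset.
  have Ki2 : K [set` i2].
    by apply: (Ksub _ _ Ki) => z /=; rewrite /i2 => /fsetD1P[].
  have nb : ~ is_base K [set` i2].
    move=> [_ mx].
    have e := mx _ Ki (fun z (h : z \in i2) => (fsetD1P _ _ _ h).2).
    have : [set` i] x by [].
    by rewrite e /= /i2 => /fsetD1P[/eqP].
  have [y [By [ni2 Ky]]] := Kaug _ _ Bb Ki2 nb.
  have yi2 : y \notin i2 by apply/negP.
  right; exists (y |` i2)%fset; split.
    apply: (Ksub _ _ Ky) => z /= /fset1UP[->|h]; [by right|by left].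
  split.
    rewrite cardfsU1 yi2 (cardfsD1 x i) xi /i2 /=; lia.
  apply: (@lt_card_aux _ _ _ y).
  - apply/fsubsetP => z /fsetDP[zb zn]; apply/fsetDP; split => //.
    apply/negP => zi; move/negP: zn; apply; apply/fset1UP; right.
    apply/fsetD1P; split => //; apply/negP => /eqP ezx.
    by move: zb; rewrite ezx (negbTE xb).
  - apply/fsetDP; split => //; apply/negP => yi; apply: ni2 => /=.
    apply/fsetD1P; split => //; apply/negP => /eqP eyx.
    by move: By; rewrite /= eyx (negbTE xb).
  - by apply/negP => /fsetDP[_ /negP]; apply; apply/fset1UP; left.
have [y [By [ni Ky]]] := Kaug _ _ Bb Ki nib.
have yi : y \notin i by apply/negP.
right; exists (y |` i)%fset; split.
  apply: (Ksub _ _ Ky) => z /= /fset1UP[->|h]; [by right|by left].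
split.
  by rewrite cardfsU1 yi.
apply: (@lt_card_aux _ _ _ y).
- apply/fsubsetP => z /fsetDP[zb zn]; apply/fsetDP; split => //.
  by apply/negP => zi; move/negP: zn; apply; apply/fset1UP; right.
- by apply/fsetDP; split.
- by apply/negP => /fsetDP[_ /negP]; apply; apply/fset1UP; left.
Qed.

Lemma core_aux (T : choiceType) (K : set (set T)) (b : {fset T}) :
  is_matroid K -> is_base K [set` b] ->
  forall n (i : {fset T}), (#|` (b `\` i)%fset| <= n)%N -> K [set` i] ->
  (#|` i| <= #|` b|)%N.
Proof.
move=> KM Bb n; elim: n => [|n IH] i hn Ki;
  case: (step_aux KM Bb Ki) => [//|[j [Kj [ij bj]]]].
  lia.
apply: (leq_trans ij); apply: IH Kj; lia.
Qed.

Theorem theorem3p4p1 (E : Type) (L : set (set E)) :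
  is_matroid L -> nearly_finitary L -> is_matroid (hat_indep L) ->
  exists k : nat, k_nearly_finitary k L.
Proof.
move=> ML nf KM.
have KM' := KM; case: KM' => K0 Ksub Kaug Kmax.
have Kfin : forall S, hat_indep L S -> finite_set S.
  move=> S [F [B [hF [hB [BF SF]]]]].
  exact: sub_finite_set SF (nf F B hF hB BF).
have [M [[KM0 _] Mmax]] := Kmax set0 setT K0 (sub0set _).
have Mbase : is_base (hat_indep L) M.
  split => // S KS MS; apply: Mmax => //; split => //; split => //; exact: sub0set.

pose T := {classic E}.
pose b := fset_set (M : set T).
have Mb : M = [set` b] by rewrite /b fset_setK //; exact: Kfin.
exists (#|` b|)%fset; move=> F B hF hB BF.
have KS : hat_indep L (F `\` B) by rewrite /hat_indep /=; exists F, B; split=> //; split=> //; split=> //.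
have fS := Kfin _ KS.
have Sb : (F `\` B : set T) = [set` fset_set (F `\` B : set T)] by rewrite fset_setK.
have := @core_aux T (hat_indep L) b KM _ _ (fset_set (F `\` B : set T)) (leqnn _).
rewrite -Mb -Sb => /(_ Mbase KS) hle.
have /finite_setP [m Sm] := fS.
have em := @card_fset_set T (F `\` B) m Sm.
apply: (card_le_trans (B := `I_m)).
  by move: Sm; rewrite card_eq_le => /andP[].
by rewrite card_le_II -em.
Qed.
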